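(* For every positive integer $n$, there exists a semigroup $S$ with a left ideal $A$ such that $\mathrm{H}_{\mathcal{R}}(S)=n$ and $\mathrm{H}_{\mathcal{R}}(A)=2n$.
   Context: A left ideal of $S$ is a non-empty subset $A$ with $SA\subseteq A$. Green's preorder on a semigroup $M$: $u\leq_{\mathcal{R}} v$ iff $uM^1\subseteq vM^1$, where $M^1$ is $M$ with an identity adjoined if necessary; $\mathcal{R}$ is the associated equivalence; the $\mathcal{R}$-height $\mathrm{H}_{\mathcal{R}}(M)$ is the supremum of the cardinalities of chains in the poset of $\mathcal{R}$-classes. $\mathrm{H}_{\mathcal{R}}(A)$ is computed in $A$ as a semigroup. *)

(* Defs.v *)
From Stdlib Require Import List Arith.
Import ListNotations.
Set Implicit Arguments.

Section Semigroups.
Variable T : Type.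
Variable mul : T -> T -> T.

Definition associative_op : Prop :=
  forall x y z, mul x (mul y z) = mul (mul x y) z.

Definition left_ideal (A : T -> Prop) : Prop :=
  (exists a, A a) /\ forall s a, A a -> A (mul s a).

(* The subsemigroup with carrier P (P closed under mul), and the set
   x P^1 = {x} ∪ {x m | m ∈ P}, computed inside that subsemigroup. *)
Definition right_principal (P : T -> Prop) (x : T) (z : T) : Prop :=
  z = x \/ exists m, P m /\ z = mul x m.

Definition leR (P : T -> Prop) (u v : T) : Prop :=
  forall z, right_principal P u z -> right_principal P v z.

Definition ltR (P : T -> Prop) (u v : T) : Prop :=
  leR P u v /\ ~ leR P v u.

Fixpoint R_chain (P : T -> Prop) (l : list T) : Prop :=
  match l with
  | x :: ((y :: _) as t) => ltR P y x /\ R_chain P t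
  | _ => True
  end.

Definition R_height (P : T -> Prop) (n : nat) : Prop :=
  (exists l, length l = n /\ Forall P l /\ R_chain P l) /\
  (forall l, Forall P l -> R_chain P l -> length l <= n).
End Semigroups.

(* Main.v *)
Require Import Defs.
From Stdlib Require Import List Arith.
From Stdlib Require Import Lia Bool ClassicalEpsilon ProofIrrelevance FunctionalExtensionality.
Import ListNotations.

Definition inj (f : nat -> nat) := forall a b, f a = f b -> a = b.
Definition infco (f : nat -> nat) := forall m, exists v, m <= v /\ forall t, f t <> v.
Definition BL := {f : nat -> nat | inj f /\ infco f}.
Definition bf (x : BL) : nat -> nat := proj1_sig x.

Lemma BL_eq (x y : BL) : (forall t, bf x t = bf y t) -> x = y.
Proof.
  destruct x as [f Hf], y as [g Hg]; unfold bf; simpl; intros H.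
  assert (f = g) by (apply functional_extensionality; auto). subst g.
  f_equal. apply proof_irrelevance.
Qed.

Lemma BL_inj (x : BL) : inj (bf x). Proof. destruct x as [f [H1 H2]]; exact H1. Qed.
Lemma BL_infco (x : BL) : infco (bf x). Proof. destruct x as [f [H1 H2]]; exact H2. Qed.

Definition bmul (x y : BL) : BL.
Proof.
  refine (exist _ (fun t => bf y (bf x t)) _).
  split.
  - intros a b H. apply (BL_inj x), (BL_inj y), H.
  - intros m. destruct (BL_infco y m) as [v [Hv Hn]]. exists v. split; auto.
Defined.

Lemma bmul_f x y t : bf (bmul x y) t = bf y (bf x t). Proof. reflexivity. Qed.

Lemma bmul_assoc x y z : bmul x (bmul y z) = bmul (bmul x y) z.
Proof. apply BL_eq; intros; reflexivity. Qed.

Fixpoint iterg (g : nat -> nat) (k : nat) : nat :=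
  match k with 0 => g 0 | S k' => g (S (iterg g k')) end.

Lemma incr_seq (D : nat -> Prop) : (forall m, exists v, m <= v /\ D v) ->
  exists f : nat -> nat, (forall k, D (f k)) /\ (forall k, f k < f (S k)).
Proof.
  intros H.
  set (g := fun m => proj1_sig (constructive_indefinite_description _ (H m))).
  assert (Hg : forall m, m <= g m /\ D (g m)).
  { intros m; unfold g; destruct (constructive_indefinite_description _ (H m)); simpl; auto. }
  exists (iterg g). split.
  - intros [|k]; apply Hg.
  - intros k. simpl. destruct (Hg (S (iterg g k))). lia.
Qed.

Lemma incr_mono f : (forall k, f k < f (S k)) -> forall a b, a < b -> f a < f b.
Proof.
  intros H a b Hab. induction b. lia.
  destruct (Nat.eq_dec a b). subst; apply H. specialize (H b). assert (a < b) by lia. specialize (IHb H0). lia.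
Qed.

Lemma incr_inj f : (forall k, f k < f (S k)) -> forall a b, f a = f b -> a = b.
Proof.
  intros H a b E. destruct (Nat.lt_total a b) as [L|[L|L]]; auto;
  apply (incr_mono f H) in L; lia.
Qed.

Lemma incr_ge f : (forall k, f k < f (S k)) -> forall k, k <= f k.
Proof. intros H k. induction k. lia. specialize (H k). lia. Qed.

Lemma R1 (x c : BL) : exists z, bmul x z = c.
Proof.
  set (D := fun v => forall t, bf c t <> v).
  assert (HD : forall m, exists v, m <= v /\ D v) by apply (BL_infco c).
  destruct (incr_seq D HD) as [f [fD finc]].
  set (zf := fun u => match excluded_middle_informative (exists t, bf x t = u) with
               | left H => bf c (proj1_sig (constructive_indefinite_description _ H))
               | right _ => f (2*u) end).
  assert (Hz1 : forall t, zf (bf x t) = bf c t).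
  { intros t. unfold zf. destruct (excluded_middle_informative _) as [H|H].
    - destruct (constructive_indefinite_description _ H) as [t' Ht']. simpl. f_equal.
      apply (BL_inj x). exact Ht'.
    - exfalso. apply H. eauto. }
  assert (Hzi : inj zf).
  { intros u1 u2. unfold zf.
    destruct (excluded_middle_informative (exists t, bf x t = u1)) as [H1|H1];
    destruct (excluded_middle_informative (exists t, bf x t = u2)) as [H2|H2].
    - destruct (constructive_indefinite_description _ H1) as [t1 E1].
      destruct (constructive_indefinite_description _ H2) as [t2 E2]. simpl.
      intros E. apply (BL_inj c) in E. subst. reflexivity.
    - destruct (constructive_indefinite_description _ H1) as [t1 E1]. simpl.
      intros E. exfalso. exact (fD (2*u2) t1 E).
    - destruct (constructive_indefinite_description _ H2) as [t2 E2]. simpl.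
      intros E. exfalso. exact (fD (2*u1) t2 (eq_sym E)).
    - intros E. apply (incr_inj f finc) in E. lia. }
  assert (Hzc : infco zf).
  { intros m. exists (f (2*m+1)). split. pose proof (incr_ge f finc (2*m+1)). lia.
    intros u. unfold zf. destruct (excluded_middle_informative _) as [H|H].
    - destruct (constructive_indefinite_description _ H) as [t Ht]; simpl.
      intro E. exact (fD _ t E).
    - intros E. apply (incr_inj f finc) in E. lia. }
  exists (exist _ zf (conj Hzi Hzc)). apply BL_eq. intros t. rewrite bmul_f. apply Hz1.
Qed.

Definition rdiv (a b : BL) : BL := proj1_sig (constructive_indefinite_description _ (R1 a b)).
Lemma rdiv_spec a b : bmul a (rdiv a b) = b.
Proof. unfold rdiv. destruct (constructive_indefinite_description _ (R1 a b)); auto. Qed.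

Definition Av (a : BL) := forall t, exists k, bf a t = 2 * k.
Lemma Av_mul s a : Av a -> Av (bmul s a).
Proof. intros H t. rewrite bmul_f. apply H. Qed.

Definition bb : BL.
Proof.
  refine (exist _ (fun t => 2 * t) _). split.
  - intros a b; lia.
  - intros m. exists (2*m+1). split. lia. intros t; lia.
Defined.

Lemma Av_bb : Av bb. Proof. intros t. exists t. reflexivity. Qed.

Lemma bad_not y a : Av a -> bmul y a <> bb.
Proof.
  intros Ha E. destruct (BL_infco y 0) as [v [_ Hv]]. destruct (Ha v) as [k Hk].
  assert (H : bf (bmul y a) k = bf bb k) by (rewrite E; reflexivity).
  rewrite bmul_f in H. change (bf bb k) with (2*k) in H. rewrite <- Hk in H.
  apply (BL_inj a) in H. exact (Hv k H).
Qed.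

Lemma bb_ne : bmul bb bb <> bb.
Proof. intros E. assert (H : bf (bmul bb bb) 1 = bf bb 1) by (rewrite E; reflexivity).
  simpl in H. discriminate. Qed.

Definition Sty (n : nat) :=
  {x : nat -> option BL | (forall k, n <= k -> x k = None) /\ exists k, x k <> None}.
Definition sf {n} (x : Sty n) : nat -> option BL := proj1_sig x.

Definition omul (o1 o2 : option BL) : option BL :=
  match o1, o2 with
  | Some a, Some b => Some (bmul a b)
  | Some a, None => Some a
  | None, o => o
  end.

Lemma S_bnd {n} (x : Sty n) k : n <= k -> sf x k = None.
Proof. destruct x as [f [H1 H2]]; apply H1. Qed.
Lemma S_ne {n} (x : Sty n) : exists k, sf x k <> None.
Proof. destruct x as [f [H1 H2]]; apply H2. Qed.

Definition Smul {n} (x y : Sty n) : Sty n.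
Proof.
  refine (exist _ (fun k => omul (sf x k) (sf y k)) _). split.
  - intros k Hk. rewrite (S_bnd x k Hk), (S_bnd y k Hk). reflexivity.
  - destruct (S_ne x) as [k0 Hk0]. exists k0.
    destruct (sf x k0) as [a|]; [destruct (sf y k0); simpl; discriminate | congruence].
Defined.

Lemma Smul_f {n} (x y : Sty n) k : sf (Smul x y) k = omul (sf x k) (sf y k).
Proof. reflexivity. Qed.

Lemma S_eq {n} (x y : Sty n) : (forall k, sf x k = sf y k) -> x = y.
Proof.
  destruct x as [f Hf], y as [g Hg]; unfold sf; simpl; intros H.
  assert (f = g) by (apply functional_extensionality; auto). subst g.
  f_equal. apply proof_irrelevance.
Qed.

Lemma omul_assoc a b c : omul a (omul b c) = omul (omul a b) c.
Proof. destruct a, b, c; simpl; try rewrite bmul_assoc; reflexivity. Qed.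

Lemma Smul_assoc n : associative_op (@Smul n).
Proof. intros x y z. apply S_eq. intros k. rewrite !Smul_f. apply omul_assoc. Qed.

Lemma div_k {n} (y x : Sty n) (k : nat) (h : BL) :
  (forall j, sf y j <> None -> sf x j <> None) ->
  (forall a b, sf y k = Some a -> sf x k = Some b -> b = bmul a h) ->
  exists s : Sty n, x = Smul y s /\ (sf y k = None -> sf s k = sf x k)
                    /\ (sf y k <> None -> sf s k = Some h).
Proof.
  intros Hp Hk.
  set (g := fun j => match sf y j, sf x j with
                     | Some a, Some b => Some (if Nat.eqb j k then h else rdiv a b)
                     | None, o => o
                     | Some _, None => None end).
  assert (Hv : (forall j, n <= j -> g j = None) /\ exists j, g j <> None).
  { split.
    - intros j Hj. unfold g. rewrite (S_bnd y j Hj), (S_bnd x j Hj). reflexivity.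
    - destruct (S_ne x) as [j Hj]. exists j. unfold g.
      destruct (sf y j); destruct (sf x j); try discriminate; congruence. }
  exists (exist _ g Hv). split; [|split].
  - apply S_eq. intros j. rewrite Smul_f. unfold sf at 3. simpl. unfold g.
    specialize (Hp j). specialize (Hk).
    destruct (sf y j) as [a|] eqn:Ey; destruct (sf x j) as [b|] eqn:Ex; simpl; auto.
    + destruct (Nat.eqb_spec j k).
      * subst j. f_equal. apply Hk; auto.
      * rewrite rdiv_spec. reflexivity.
    + exfalso. apply Hp; [discriminate|reflexivity].
  - intros E. unfold sf at 1. simpl. unfold g. rewrite E. reflexivity.
  - intros E. unfold sf at 1. simpl. unfold g.
    destruct (sf y k) eqn:Ey; [|congruence].
    destruct (sf x k) eqn:Ex.
    + rewrite Nat.eqb_refl. reflexivity.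
    + exfalso. apply (Hp k); [rewrite Ey; discriminate | exact Ex].
Qed.

Lemma leR_refl {T} (mul : T -> T -> T) P u : leR mul P u u.
Proof. unfold leR; auto. Qed.

Lemma leR_inv {T} (mul : T -> T -> T) P u v :
  leR mul P u v -> u = v \/ exists m, P m /\ u = mul v m.
Proof. intros H. apply H. left. reflexivity. Qed.

Lemma leR_mul {T} (mul : T -> T -> T) (P : T -> Prop) v s :
  associative_op mul -> (forall a b, P b -> P (mul a b)) -> P s -> leR mul P (mul v s) v.
Proof.
  intros Has HP Ps z [E|[m [Pm E]]]; right.
  - exists s; auto.
  - exists (mul s m). split; auto. rewrite E, Has. reflexivity.
Qed.

Lemma le_pat {n} P (u v : Sty n) :
  leR Smul P u v -> forall k, sf v k <> None -> sf u k <> None.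
Proof.
  intros H k Hk. destruct (leR_inv _ _ _ _ H) as [->|[m [_ ->]]]; auto.
  rewrite Smul_f. destruct (sf v k); simpl; [destruct (sf m k); discriminate | contradiction].
Qed.

Fixpoint cnt (f : nat -> option BL) (m : nat) : nat :=
  match m with
  | 0 => 0
  | S m' => cnt f m' + (match f m' with Some _ => 1 | None => 0 end)
  end.

Lemma cnt_le f g m : (forall k, f k <> None -> g k <> None) -> cnt f m <= cnt g m.
Proof.
  intros H. induction m; simpl; auto.
  destruct (f m) eqn:E1; destruct (g m) eqn:E2; try lia.
  exfalso. assert (Hm := H m). rewrite E1, E2 in Hm. apply Hm; [discriminate|reflexivity].
Qed.

Lemma cnt_eq f g m : (forall k, f k <> None -> g k <> None) -> cnt f m = cnt g m ->
  forall k, k < m -> g k <> None -> f k <> None.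
Proof.
  intros H. induction m; intros Hc k Hk Hg. lia.
  assert (Hle := cnt_le f g m H). simpl in Hc.
  destruct (f m) eqn:E1; destruct (g m) eqn:E2.
  - destruct (Nat.eq_dec k m). subst; rewrite E1; discriminate. apply IHm; auto; lia.
  - exfalso. assert (Hm := H m). rewrite E1, E2 in Hm. apply Hm; [discriminate|reflexivity].
  - lia.
  - destruct (Nat.eq_dec k m). subst; congruence. apply IHm; auto; lia.
Qed.

Lemma cnt_bound f m : cnt f m <= m.
Proof. induction m; simpl; auto. destruct (f m); lia. Qed.

Lemma cnt_pos f m k : k < m -> f k <> None -> 1 <= cnt f m.
Proof.
  induction m; intros Hk Hf. lia. simpl.
  destruct (Nat.eq_dec k m). subst. destruct (f m); [lia|congruence].
  assert (1 <= cnt f m) by (apply IHm; auto; lia). lia.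
Qed.

Lemma S_cnt_pos {n} (x : Sty n) : 1 <= cnt (sf x) n.
Proof.
  destruct (S_ne x) as [k Hk]. apply (cnt_pos _ _ k); auto.
  destruct (Nat.lt_ge_cases k n); auto. exfalso. apply Hk. apply S_bnd; auto.
Qed.

Lemma pat_eq {n} (x y : Sty n) :
  (forall k, sf x k <> None -> sf y k <> None) -> cnt (sf x) n = cnt (sf y) n ->
  forall k, sf y k <> None -> sf x k <> None.
Proof.
  intros H Hc k Hk. destruct (Nat.lt_ge_cases k n).
  - eapply cnt_eq; eauto.
  - exfalso. apply Hk. apply S_bnd; auto.
Qed.

Definition TT {n} : Sty n -> Prop := fun _ => True.

Lemma leS {n} (x y : Sty n) :
  (forall k, sf y k <> None -> sf x k <> None) -> leR Smul TT x y.
Proof.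
  intros H. destruct (div_k y x n bb H) as [s [E _]].
  { intros a b Ha. rewrite S_bnd in Ha; [discriminate|auto]. }
  rewrite E. apply leR_mul; auto. apply Smul_assoc. exact I.
Qed.

Lemma chainS {n} : forall l (x : Sty n), R_chain Smul TT (x :: l) ->
  length (x :: l) + cnt (sf x) n <= n + 1.
Proof.
  induction l as [|y t IH]; intros x Hc.
  - simpl. pose proof (cnt_bound (sf x) n). lia.
  - simpl in Hc. destruct Hc as [[Hyx Hnxy] Hc'].
    specialize (IH y Hc').
    assert (Hp := le_pat _ _ _ Hyx).
    assert (Hle := cnt_le _ _ n Hp).
    assert (cnt (sf x) n <> cnt (sf y) n).
    { intros Hc. apply Hnxy. apply leS. apply pat_eq; auto. }
    simpl in *. lia.
Qed.

Definition Aset {n} (x : Sty n) : Prop := exists k a, sf x k = Some a /\ Av a.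

Lemma Aset_mul {n} (s x : Sty n) : Aset x -> Aset (Smul s x).
Proof.
  intros [k [a [Hk Ha]]].
  destruct (sf s k) as [s'|] eqn:Es.
  - exists k, (bmul s' a). rewrite Smul_f, Es, Hk. split; auto. apply Av_mul; auto.
  - exists k, a. rewrite Smul_f, Es, Hk. auto.
Qed.

Lemma triple {n} (x y z : Sty n) :
  ltR Smul Aset y x -> ltR Smul Aset z y -> cnt (sf x) n = cnt (sf y) n ->
  cnt (sf y) n < cnt (sf z) n.
Proof.
  intros [Hyx Hnxy] [Hzy Hnyz] Hc.
  destruct (leR_inv _ _ _ _ Hyx) as [E|[a [Ha E]]].
  { subst. exfalso. apply Hnxy. apply leR_refl. }
  assert (P1 := le_pat _ _ _ Hyx). assert (P2 := le_pat _ _ _ Hzy).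
  assert (Hle := cnt_le _ _ n P2).
  destruct (Nat.eq_dec (cnt (sf y) n) (cnt (sf z) n)) as [Hc2|]; [|lia].
  exfalso.
  assert (Q1 := pat_eq _ _ P1 Hc). assert (Q2 := pat_eq _ _ P2 Hc2).
  destruct Ha as [k [a' [Hak Hav]]].
  assert (Hyk : sf y k = omul (sf x k) (Some a')) by (rewrite E, Smul_f, Hak; reflexivity).
  destruct (sf x k) as [x'|] eqn:Exk.
  - simpl in Hyk.
    destruct (sf z k) as [z'|] eqn:Ezk.
    2:{ apply (P2 k); [rewrite Hyk; discriminate | exact Ezk]. }
    set (h := rdiv z' x').
    destruct (div_k z y k (bmul h a') Q2) as [s [Es [_ Hs]]].
    { intros a0 b0 Ha0 Hb0. rewrite Ezk in Ha0. rewrite Hyk in Hb0.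
      injection Ha0 as <-. injection Hb0 as <-.
      rewrite bmul_assoc. unfold h. rewrite rdiv_spec. reflexivity. }
    apply Hnyz. rewrite Es. apply leR_mul. apply Smul_assoc.
    intros; apply Aset_mul; auto.
    exists k, (bmul h a'). split. apply Hs. rewrite Ezk; discriminate. apply Av_mul; auto.
  - simpl in Hyk. apply (Q1 k); [rewrite Hyk; discriminate | exact Exk].
Qed.

Lemma chainA {n} : forall N l (x : Sty n), length l <= N -> R_chain Smul Aset (x :: l) ->
  length (x :: l) + 2 * cnt (sf x) n <= 2 * n + 2.
Proof.
  induction N; intros l x Hl Hc.
  - destruct l; simpl in Hl; [|lia]. simpl. pose proof (cnt_bound (sf x) n). lia.
  - destruct l as [|y t].
    { simpl. pose proof (cnt_bound (sf x) n). lia. }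
    simpl in Hc. destruct Hc as [Hyx Hc'].
    assert (Hle := cnt_le _ _ n (le_pat _ _ _ (proj1 Hyx))).
    destruct (Nat.eq_dec (cnt (sf x) n) (cnt (sf y) n)) as [Eq|Ne].
    + destruct t as [|z t'].
      * simpl. pose proof (cnt_bound (sf y) n). lia.
      * simpl in Hc'. destruct Hc' as [Hzy Hc''].
        assert (Hlt := triple x y z Hyx Hzy Eq).
        simpl in Hl.
        assert (IH := IHN t' z ltac:(lia) Hc''). simpl in *. lia.
    + simpl in Hl. assert (IH := IHN t y ltac:(lia) Hc'). simpl in *. lia.
Qed.

Definition ef (m p : nat) (c : BL) : nat -> option BL :=
  fun k => if (Nat.min p m <=? k) && (k <=? m) then Some c else None.

Definition elem (m p : nat) (c : BL) : Sty (S m).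
Proof.
  refine (exist _ (ef m p c) _). split.
  - intros k Hk. unfold ef.
    destruct (Nat.leb_spec (Nat.min p m) k); destruct (Nat.leb_spec k m); simpl; try reflexivity; lia.
  - exists m. unfold ef.
    replace ((Nat.min p m <=? m) && (m <=? m)) with true. discriminate.
    symmetry. apply andb_true_iff. split; apply Nat.leb_le; lia.
Defined.

Lemma sf_elem m p c k : sf (elem m p c) k = ef m p c k.
Proof. reflexivity. Qed.

Lemma ef_spec m p c k : p <= m ->
  (p <= k <= m /\ ef m p c k = Some c) \/ (~ (p <= k <= m) /\ ef m p c k = None).
Proof.
  intros H. unfold ef. rewrite Nat.min_l by auto.
  destruct (Nat.leb_spec p k); destruct (Nat.leb_spec k m); simpl; [left|right|right|right]; split; auto; lia.
Qed.

Definition bad m p := elem m p bb.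
Definition good m p := elem m p (bmul bb bb).

Lemma A_elem m p c : p <= m -> Av c -> Aset (elem m p c).
Proof.
  intros H Hc. exists m, c. rewrite sf_elem. split; auto.
  destruct (ef_spec m p c m H) as [[_ E]|[N _]]; auto. lia.
Qed.

Lemma rel1 m p : p <= m -> ltR Smul Aset (good m p) (bad m p).
Proof.
  intros H. split.
  - destruct (div_k (bad m p) (good m p) m bb) as [s [Es [_ Hs]]].
    + intros j. unfold bad, good. rewrite !sf_elem.
      destruct (ef_spec m p bb j H) as [[R1 E1]|[R1 E1]];
      destruct (ef_spec m p (bmul bb bb) j H) as [[R2 E2]|[R2 E2]];
      rewrite E1, E2; intros C0; try (intro; discriminate); try (exfalso; lia); auto.
    + intros a b Ha Hb. unfold bad, good in *. rewrite sf_elem in Ha, Hb.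
      destruct (ef_spec m p bb m H) as [[_ E1]|[N _]]; [|lia].
      destruct (ef_spec m p (bmul bb bb) m H) as [[_ E2]|[N _]]; [|lia].
      rewrite E1 in Ha. rewrite E2 in Hb. congruence.
    + rewrite Es. apply leR_mul. apply Smul_assoc. intros; apply Aset_mul; auto.
      exists m, bb. split; [apply Hs|apply Av_bb].
      unfold bad; rewrite sf_elem.
      destruct (ef_spec m p bb m H) as [[_ E1]|[N _]]; [|lia]. rewrite E1; discriminate.
  - intros Hl. destruct (leR_inv _ _ _ _ Hl) as [E|[s [[k [a [Hk Ha]]] E]]].
    + assert (H1 : sf (bad m p) m = sf (good m p) m) by (rewrite E; reflexivity).
      unfold bad, good in H1. rewrite !sf_elem in H1.
      destruct (ef_spec m p bb m H) as [[_ E1]|[N _]]; [|lia].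
      destruct (ef_spec m p (bmul bb bb) m H) as [[_ E2]|[N _]]; [|lia].
      rewrite E1, E2 in H1. apply bb_ne. congruence.
    + assert (H1 : sf (bad m p) k = sf (Smul (good m p) s) k) by (rewrite E; reflexivity).
      rewrite Smul_f, Hk in H1. unfold bad, good in H1. rewrite !sf_elem in H1.
      destruct (ef_spec m p bb k H) as [[R1 E1]|[R1 E1]];
      destruct (ef_spec m p (bmul bb bb) k H) as [[R2 E2]|[R2 E2]];
      rewrite E1, E2 in H1; cbn [omul] in H1; try discriminate; try (exfalso; lia).
      apply (bad_not (bmul bb bb) a Ha). congruence.
Qed.

Lemma pat_sub m p c d : S p <= m -> forall j, sf (elem m (S p) c) j <> None -> sf (elem m p d) j <> None.
Proof.
  intros H j. rewrite !sf_elem.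
  destruct (ef_spec m (S p) c j H) as [[R1 E1]|[R1 E1]];
  destruct (ef_spec m p d j ltac:(lia)) as [[R2 E2]|[R2 E2]];
  rewrite E1, E2; intros C0; try (intro; discriminate); try (exfalso; lia); auto.
Qed.

Lemma not_le_sub m (P : Sty (S m) -> Prop) p c d : S p <= m -> ~ leR Smul P (elem m (S p) c) (elem m p d).
Proof.
  intros H Hl. apply (le_pat _ _ _ Hl p); rewrite sf_elem.
  - destruct (ef_spec m p d p ltac:(lia)) as [[_ E]|[N _]]; [rewrite E; discriminate|lia].
  - destruct (ef_spec m (S p) c p H) as [[N _]|[_ E]]; [lia|exact E].
Qed.

Lemma rel2 m p : S p <= m -> ltR Smul Aset (bad m p) (good m (S p)).
Proof.
  intros H. split.
  - destruct (div_k (good m (S p)) (bad m p) p bb) as [s [Es [Hs _]]].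
    + apply pat_sub; auto.
    + intros a b Ha. unfold good in Ha. rewrite sf_elem in Ha.
      destruct (ef_spec m (S p) (bmul bb bb) p H) as [[N _]|[_ E]]; [lia|]. congruence.
    + rewrite Es. apply leR_mul. apply Smul_assoc. intros; apply Aset_mul; auto.
      exists p, bb. split; [|apply Av_bb].
      rewrite Hs. unfold bad; rewrite sf_elem.
      destruct (ef_spec m p bb p ltac:(lia)) as [[_ E]|[N _]]; [exact E|lia].
      unfold good; rewrite sf_elem.
      destruct (ef_spec m (S p) (bmul bb bb) p H) as [[N _]|[_ E]]; [lia|exact E].
  - apply not_le_sub; auto.
Qed.

Lemma rel3 m p : S p <= m -> ltR Smul TT (bad m p) (bad m (S p)).
Proof.
  intros H. split.
  - apply leS. apply pat_sub; auto.
  - apply not_le_sub; auto.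
Qed.

Fixpoint LA (m p : nat) : list (Sty (S m)) :=
  bad m p :: good m p :: (match p with 0 => [] | S p' => LA m p' end).
Fixpoint LS (m p : nat) : list (Sty (S m)) :=
  bad m p :: (match p with 0 => [] | S p' => LS m p' end).

Lemma LA_len m p : length (LA m p) = 2 * S p.
Proof. induction p; simpl in *; lia. Qed.
Lemma LS_len m p : length (LS m p) = S p.
Proof. induction p; simpl in *; lia. Qed.

Lemma LA_eq m p : LA m p = bad m p :: good m p :: (match p with 0 => [] | S p' => LA m p' end).
Proof. destruct p; reflexivity. Qed.
Lemma LS_eq m p : LS m p = bad m p :: (match p with 0 => [] | S p' => LS m p' end).
Proof. destruct p; reflexivity. Qed.

Lemma LA_chain m p : p <= m -> R_chain Smul Aset (LA m p).
Proof.
  induction p; intros H.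
  - simpl. split; auto. apply rel1; auto.
  - rewrite LA_eq. assert (IH := IHp ltac:(lia)). rewrite LA_eq in IH |- *.
    simpl. split. apply rel1; auto. split. apply rel2; auto.
    exact IH.
Qed.

Lemma LS_chain m p : p <= m -> R_chain Smul TT (LS m p).
Proof.
  induction p; intros H.
  - simpl. auto.
  - assert (IH := IHp ltac:(lia)).
    change (LS m (S p)) with (bad m (S p) :: LS m p). rewrite (LS_eq m p) in IH |- *.
    split. apply rel3; auto. exact IH.
Qed.

Lemma LA_forall m p : p <= m -> Forall Aset (LA m p).
Proof.
  induction p; intros H; simpl; constructor; try constructor; try apply A_elem; auto;
  try apply Av_bb; try (apply Av_mul; apply Av_bb); try lia.
  apply IHp; lia.
Qed.

Theorem corollary4p9 :
  forall n : nat, 0 < n ->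
  exists (S : Type) (mul : S -> S -> S),
    associative_op mul /\
    exists A : S -> Prop,
      left_ideal mul A /\
      R_height mul (fun _ => True) n /\
      R_height mul A (2 * n).
Proof.
  intros n Hn. destruct n as [|m]; [lia|].
  exists (Sty (S m)), Smul. split. apply Smul_assoc.
  exists Aset. split; [|split].
  - split. exists (bad m 0). apply A_elem; [lia|apply Av_bb].
    intros s a Ha. apply Aset_mul; auto.
  - split.
    + exists (LS m m). split. apply LS_len. split.
      * clear. induction (LS m m); constructor; auto.
      * apply LS_chain; auto.
    + intros l _ Hc. destruct l as [|x t]. simpl; lia.
      pose proof (chainS t x Hc). pose proof (S_cnt_pos x). lia.
  - split.
    + exists (LA m m). split. apply LA_len. split. apply LA_forall; auto. apply LA_chain; auto.
    + intros l _ Hc. destruct l as [|x t]. simpl; lia.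
      pose proof (chainA (length t) t x (le_n _) Hc). pose proof (S_cnt_pos x). lia.
Qed.
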